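(* Let $T\in\mathbb R^{m\times n}$ be injective and satisfy the positive cone condition, $y\in\mathbb R^m$, and $\lambda>0$. Then there exists $\varepsilon\in(0,\lambda)$ such that $N(\lambda)\subset N(\mu)$ for all $\mu\in[\lambda-\varepsilon,\lambda]$.
   Context: For $\lambda>0$, $x_\lambda$ is the unique minimizer of $x\mapsto\frac{\lambda}{2}\|Tx-y\|_2^2+\|x\|_1$ on $\mathbb R^n$; $N(\lambda)=\{i:x_\lambda^i=0\}$. Positive cone condition: for every nonempty $J\subset\{1,\dots,n\}$, with $T^J$ the submatrix of columns indexed by $J$ and $S_J=((T^J)^TT^J)^{-1}$, one has $(S_J)_{i,i}-\sum_{j\ne i}|(S_J)_{i,j}|\ge0$ for all $i\in J$. *)

(* Defs.v *)
From mathcomp Require Import all_boot all_order all_algebra.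
Set Implicit Arguments. Unset Strict Implicit. Unset Printing Implicit Defensive.
Import Order.TTheory GRing.Theory Num.Theory.
Local Open Scope ring_scope.

Definition lasso_obj (R : realFieldType) (m n : nat) (T : 'M[R]_(m, n))
  (y : 'cV[R]_m) (lam : R) (x : 'cV[R]_n) : R :=
  lam / 2%:R * (\sum_(i < m) ((T *m x - y) i 0) ^+ 2) + \sum_(j < n) `|x j 0|.

Definition is_lasso_min (R : realFieldType) (m n : nat) (T : 'M[R]_(m, n))
  (y : 'cV[R]_m) (lam : R) (x : 'cV[R]_n) : Prop :=
  forall z : 'cV[R]_n, lasso_obj T y lam x <= lasso_obj T y lam z.

Definition zero_set (R : realFieldType) (n : nat) (x : 'cV[R]_n) : {set 'I_n} :=
  [set i | x i 0 == 0].

(* T^J : submatrix of the columns indexed by J (in increasing order) *)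
Definition colsJ (R : realFieldType) (m n : nat) (T : 'M[R]_(m, n))
  (J : {set 'I_n}) : 'M[R]_(m, #|J|) :=
  colsub (fun j : 'I_#|J| => enum_val j) T.

Definition SJ (R : realFieldType) (m n : nat) (T : 'M[R]_(m, n))
  (J : {set 'I_n}) : 'M[R]_#|J| :=
  invmx ((colsJ T J)^T *m colsJ T J).

Definition positive_cone_condition (R : realFieldType) (m n : nat)
  (T : 'M[R]_(m, n)) : Prop :=
  forall J : {set 'I_n}, J != set0 ->
    forall i : 'I_#|J|,
      0 <= SJ T J i i - \sum_(j < #|J| | j != i) `|SJ T J i j|.

(* Main.v *)
Require Import Defs.
From mathcomp Require Import all_boot all_order all_algebra.
From mathcomp Require Import reals.
From mathcomp Require Import ring lra.
From Stdlib Require Import Classical_Prop.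
Import Order.TTheory GRing.Theory Num.Theory.
Local Open Scope ring_scope.
Set Implicit Arguments. Unset Strict Implicit.

Lemma AB_lemma (R : realFieldType) (A B : R) : 0 <= B ->
  (forall t : R, 0 < t -> t <= 1 -> 0 <= t * A + t ^+ 2 * B) -> 0 <= A.
Proof.
move=> B0 H; rewrite leNgt; apply/negP => A0.
set D := 2%:R * B - A.
have D0 : 0 < D by rewrite /D; lra.
set t := - A / D.
have tD : t * D = - A by rewrite /t mulfVK // gt_eqF.
have t0 : 0 < t by rewrite /t divr_gt0 // oppr_gt0.
have t1 : t <= 1.
  by rewrite /t ler_pdivrMr // mul1r /D; lra.
have := H t t0 t1.
have -> : t * A + t ^+ 2 * B = t * (A + t * B) by ring.
rewrite pmulr_rge0 // => h.
have : 0 <= (A + t * B) * D by rewrite mulr_ge0 // ltW.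
have -> : (A + t * B) * D = A * D + (t * D) * B by ring.
rewrite tD /D.
nra.
Qed.
Section S.
Variables (R : realFieldType) (m n : nat) (T : 'M[R]_(m, n)) (y : 'cV[R]_m).

Definition gr (x : 'cV[R]_n) (i : 'I_n) : R :=
  \sum_(k < m) (T *m x - y) k 0 * T k i.

Lemma Tdelta (i : 'I_n) k : (T *m (delta_mx i 0 : 'cV[R]_n)) k 0 = T k i.
Proof. by rewrite -colE mxE. Qed.

Lemma obj_pert (lam : R) (a : 'cV[R]_n) i (s : R) :
  lasso_obj T y lam (a + s *: (delta_mx i 0 : 'cV[R]_n)) =
  lasso_obj T y lam a + lam * s * gr a i
  + lam / 2%:R * s ^+ 2 * (\sum_(k < m) T k i ^+ 2)
  + (`|a i 0 + s| - `|a i 0|).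
Proof.
rewrite /lasso_obj /gr.
have E : forall k, (T *m (a + s *: (delta_mx i 0 : 'cV[R]_n)) - y) k 0 =
   (T *m a - y) k 0 + s * T k i.
  move=> k; rewrite mulmxDr -scalemxAr !mxE -Tdelta !mxE; ring.
under eq_bigr do rewrite E.
have -> : \sum_(k < m) ((T *m a - y) k 0 + s * T k i) ^+ 2 =
   \sum_(k < m) ((T *m a - y) k 0) ^+ 2 + 2%:R * s * \sum_(k < m) (T *m a - y) k 0 * T k i
   + s ^+ 2 * \sum_(k < m) T k i ^+ 2.
  rewrite !mulr_sumr -!big_split /=; apply: eq_bigr => k _; ring.
rewrite [X in _ + X = _](bigD1 i) //= [X in _ = _ + X + _ + _ + _](bigD1 i) //=.
have -> : \sum_(j < n | j != i) `|(a + s *: (delta_mx i 0 : 'cV[R]_n)) j 0| =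
          \sum_(j < n | j != i) `|a j 0|.
  apply: eq_bigr => j ji; rewrite !mxE (negbTE ji) /=; congr `|_|; ring.
rewrite !mxE !eqxx /=.
have -> : s * (1 : R) = s by rewrite mulr1.
have h2 : (2%:R : R) != 0 by rewrite pnatr_eq0.
by field.
Qed.


Lemma vi_lemma (lam : R) (a : 'cV[R]_n) : is_lasso_min T y lam a -> 0 < lam ->
  forall i (z : R), 0 <= lam * gr a i * (z - a i 0) + `|z| - `|a i 0|.
Proof.
move=> Ha l0 i z.
set d := z - a i 0.
set S := \sum_(k < m) T k i ^+ 2.
have S0 : 0 <= S by apply: sumr_ge0 => k _; apply: sqr_ge0.
apply: (@AB_lemma _ _ (lam / 2%:R * d ^+ 2 * S)).
  apply: mulr_ge0 => //; apply: mulr_ge0; [apply: divr_ge0; [apply: ltW | ] | apply: sqr_ge0] => //.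
move=> t t0 t1.
have := Ha (a + (t * d) *: (delta_mx i 0 : 'cV[R]_n)).
rewrite obj_pert => H.
have Hn : `|a i 0 + t * d| <= (1 - t) * `|a i 0| + t * `|z|.
  have -> : a i 0 + t * d = (1 - t) * a i 0 + t * z by rewrite /d; ring.
  apply: le_trans (ler_normD _ _) _.
  rewrite !normrM (ger0_norm (ltW t0)) ger0_norm ?subr_ge0 //.
rewrite -/S in H.
have -> : t * (lam * gr a i * d + `|z| - `|a i 0|) + t ^+ 2 * (lam / 2%:R * d ^+ 2 * S)
  = lam * (t * d) * gr a i + lam / 2%:R * (t * d) ^+ 2 * S
  + ((1 - t) * `|a i 0| + t * `|z|) - `|a i 0| by ring.
lra.
Qed.

Lemma foc (lam : R) (a : 'cV[R]_n) : is_lasso_min T y lam a -> 0 < lam ->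
  forall i, `|lam * gr a i| <= 1 /\ (- (lam * gr a i)) * a i 0 = `|a i 0|.
Proof.
move=> Ha l0 i.
set c := lam * gr a i.
have V := vi_lemma Ha l0 i.
have h1 := V (a i 0 + 1).
have h2 := V (a i 0 - 1).
have h3 := V 0.
have n1 : `|a i 0 + 1| <= `|a i 0| + 1 by apply: le_trans (ler_normD _ _) _; rewrite normr1.
have n2 : `|a i 0 - 1| <= `|a i 0| + 1 by apply: le_trans (ler_normD _ _) _; rewrite normrN normr1.
have cb : `|c| <= 1.
  rewrite ler_norml; apply/andP; split.
    have : 0 <= c * (a i 0 + 1 - a i 0) + `|a i 0 + 1| - `|a i 0| by [].
    rewrite /c; lra.
  have : 0 <= c * (a i 0 - 1 - a i 0) + `|a i 0 - 1| - `|a i 0| by [].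
  rewrite /c; lra.
split=> //.
have e1 : `|a i 0| <= - c * a i 0.
  move: h3; rewrite normr0 /c; lra.
apply/eqP; rewrite eq_le e1 andbT.
apply: le_trans (ler_norm _) _.
by rewrite normrM normrN ler_piMl.
Qed.


Lemma Tv_entry (v : 'cV[R]_n) k : (T *m v) k 0 = \sum_(i < n) T k i * v i 0.
Proof. by rewrite mxE. Qed.

Lemma gram_rel (a b : 'cV[R]_n) i :
  \sum_(k < m) (T *m (a - b)) k 0 * T k i = gr a i - gr b i.
Proof.
rewrite /gr -sumrB; apply: eq_bigr => k _.
by rewrite mulmxBr !mxE; ring.
Qed.

Lemma quad_id (a b : 'cV[R]_n) :
  \sum_(k < m) ((T *m (a - b)) k 0) ^+ 2 =
  \sum_(i < n) (a - b) i 0 * (gr a i - gr b i).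
Proof.
under [RHS]eq_bigr do rewrite -gram_rel mulr_sumr.
rewrite exchange_big /=; apply: eq_bigr => k _.
rewrite expr2 {1}Tv_entry mulr_suml; apply: eq_bigr => i _; ring.
Qed.

Lemma est_quad (lam mu : R) (a b : 'cV[R]_n) :
  is_lasso_min T y lam a -> is_lasso_min T y mu b -> 0 < lam -> 0 < mu -> mu <= lam ->
  \sum_(k < m) ((T *m (a - b)) k 0) ^+ 2 <=
  (mu^-1 - lam^-1) * \sum_(i < n) `|a i 0 - b i 0|.
Proof.
move=> Ha Hb l0 m0 ml.
rewrite quad_id mulr_sumr; apply: ler_sum => i _.
have [ca1 ca2] := foc Ha l0 i.
have [db1 db2] := foc Hb m0 i.
set ca := - (lam * gr a i) in ca1 ca2.
set db := - (mu * gr b i) in db1 db2.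
have ga : gr a i = - (lam^-1 * ca) by rewrite /ca mulrN opprK mulrA mulVf ?mul1r // gt_eqF.
have gb : gr b i = - (mu^-1 * db) by rewrite /db mulrN opprK mulrA mulVf ?mul1r // gt_eqF.
rewrite ga gb.
have ca1' : `|ca| <= 1 by rewrite /ca normrN.
have db1' : `|db| <= 1 by rewrite /db normrN.
have h1 : a i 0 * db <= `|a i 0|.
  apply: le_trans (ler_norm _) _; rewrite normrM; apply: ler_piMr => //.
have h2 : b i 0 * ca <= `|b i 0|.
  apply: le_trans (ler_norm _) _; rewrite normrM; apply: ler_piMr => //.
have h3 : `|a i 0| - `|b i 0| <= `|a i 0 - b i 0| by apply: lerB_dist.
have al : 0 < lam^-1 by rewrite invr_gt0.
have be : 0 < mu^-1 by rewrite invr_gt0.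
have ab : lam^-1 <= mu^-1 by rewrite lef_pV2 ?posrE.
rewrite !mxE.
set A := a i 0; set B := b i 0.
rewrite -/A -/B in h1 h2 h3 ca2 db2.
have e : (A - B) * (- (lam^-1 * ca) - - (mu^-1 * db)) =
  mu^-1 * (A * db) - mu^-1 * (B * db) - lam^-1 * (A * ca) + lam^-1 * (B * ca) by ring.
rewrite e.
have k1 : mu^-1 * (A * db) <= mu^-1 * `|A| by apply: ler_wpM2l => //; apply: ltW.
have k2 : lam^-1 * (B * ca) <= lam^-1 * `|B| by apply: ler_wpM2l => //; apply: ltW.
have k3 : (mu^-1 - lam^-1) * (`|A| - `|B|) <= (mu^-1 - lam^-1) * `|A - B|.
  by apply: ler_wpM2l => //; rewrite subr_ge0.
have e2 : B * db = `|B| by rewrite mulrC db2.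
have e3 : A * ca = `|A| by rewrite mulrC ca2.
rewrite e2 e3.
lra.
Qed.


Hypothesis Tinj : forall x1 x2 : 'cV[R]_n, T *m x1 = T *m x2 -> x1 = x2.

Lemma left_inv : exists L : 'M[R]_(n, m), L *m T = 1%:M.
Proof.
have rf : row_free T^T.
  apply: inj_row_free => v H.
  have : T *m v^T = T *m 0 by rewrite mulmx0 -(trmxK T) -trmx_mul H trmx0.
  by move/Tinj => /(congr1 trmx); rewrite trmxK trmx0.
case/row_freeP: rf => B HB.
by exists B^T; rewrite -(trmxK T) -trmx_mul HB trmx1.
Qed.

Lemma sq_sum_le (x : 'I_m -> R) :
  (\sum_(k < m) `|x k|) ^+ 2 <= m%:R * \sum_(k < m) x k ^+ 2.
Proof.
set Q := \sum_(k < m) x k ^+ 2.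
have E1 : \sum_(k < m) \sum_(l < m) x k ^+ 2 = Q *+ m.
  rewrite /Q -sumrMnl; apply: eq_bigr => k _; by rewrite sumr_const card_ord.
have E2 : \sum_(k < m) \sum_(l < m) x l ^+ 2 = Q *+ m.
  by rewrite sumr_const card_ord.
have L : \sum_(k < m) \sum_(l < m) (2%:R * (`|x k| * `|x l|)) <=
         \sum_(k < m) \sum_(l < m) (x k ^+ 2 + x l ^+ 2).
  apply: ler_sum => k _; apply: ler_sum => l _.
  have : 0 <= (`|x k| - `|x l|) ^+ 2 by apply: sqr_ge0.
  rewrite -(real_normK (num_real (x k))) -(real_normK (num_real (x l))).
  have -> : (`|x k| - `|x l|) ^+ 2 = `|x k| ^+ 2 + `|x l| ^+ 2 - 2%:R * (`|x k| * `|x l|) by ring.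
  move=> h; lra.
have E3 : \sum_(k < m) \sum_(l < m) (x k ^+ 2 + x l ^+ 2) = Q *+ m + Q *+ m.
  rewrite -{1}E1 -E2 -big_split /=; apply: eq_bigr => k _; by rewrite big_split.
have E4 : \sum_(k < m) \sum_(l < m) (2%:R * (`|x k| * `|x l|)) =
   2%:R * (\sum_(k < m) `|x k|) ^+ 2.
  rewrite expr2 mulr_suml mulr_sumr; apply: eq_bigr => k _.
  by rewrite mulr_sumr mulr_sumr; apply: eq_bigr => l _.
rewrite E3 E4 in L.
rewrite -[Q *+ m]mulr_natl in L.
move: L; set S := \sum_(k < m) `|x k|; move=> L.
lra.
Qed.


Lemma entry_le_sum (L : 'M[R]_(n, m)) i k :
  `|L i k| <= \sum_(i' < n) \sum_(k' < m) `|L i' k'|.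
Proof.
rewrite (bigD1 i) //= (bigD1 k) //= -addrA lerDl.
by apply: addr_ge0; apply: sumr_ge0 => *; [apply: normr_ge0 | apply: sumr_ge0 => *].
Qed.

Lemma cont_bound : exists K : R, 0 < K /\
  forall (lam mu : R) (a b : 'cV[R]_n),
  is_lasso_min T y lam a -> is_lasso_min T y mu b -> 0 < lam -> 0 < mu -> mu <= lam ->
  forall i, `|a i 0 - b i 0| <= K * (mu^-1 - lam^-1).
Proof.
have [L HL] := left_inv.
set C := \sum_(i' < n) \sum_(k' < m) `|L i' k'|.
have C0 : 0 <= C by apply: sumr_ge0 => *; apply: sumr_ge0 => *.
exists (C * C * (m * n)%:R + 1); split.
  by apply: ltr_pwDr => //; apply: mulr_ge0 => //; apply: mulr_ge0.
move=> lam mu a b Ha Hb l0 m0 ml.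
set v := a - b.
set P := \sum_(k < m) `|(T *m v) k 0|.
have P0 : 0 <= P by apply: sumr_ge0.
have D0 : 0 <= mu^-1 - lam^-1 by rewrite subr_ge0 lef_pV2 ?posrE.
set D := mu^-1 - lam^-1 in D0 *.
have H1 : forall i, `|v i 0| <= C * P.
  move=> i.
  have -> : v = L *m (T *m v) by rewrite mulmxA HL mul1mx.
  rewrite mxE; apply: le_trans (ler_norm_sum _ _ _) _.
  rewrite /P mulr_sumr; apply: ler_sum => k _; rewrite normrM.
  by apply: ler_wpM2r => //; apply: entry_le_sum.
have H2 : \sum_(i < n) `|a i 0 - b i 0| <= n%:R * (C * P).
  have -> : n%:R * (C * P) = \sum_(i < n) C * P by rewrite sumr_const card_ord mulr_natl.
  apply: ler_sum => i _; have := H1 i; by rewrite !mxE.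
have H3 := est_quad Ha Hb l0 m0 ml.
have H4 := sq_sum_le (fun k => (T *m v) k 0).
rewrite -/P in H4.
have H5 : P ^+ 2 <= m%:R * (D * (n%:R * (C * P))).
  apply: le_trans H4 _; apply: ler_wpM2l => //.
  apply: le_trans H3 _; apply: ler_wpM2l => //.
move=> i; have := H1 i; rewrite {1}/v !mxE => H6.
apply: le_trans H6 _.
have [Pz|Ppos] := eqVneq P 0.
  rewrite Pz mulr0; apply: mulr_ge0 => //; apply: addr_ge0 => //.
  by apply: mulr_ge0; [apply: mulr_ge0|].
have Pp : 0 < P by rewrite lt_def Ppos P0.
have H7 : P <= m%:R * (D * (n%:R * C)).
  rewrite -(ler_pM2r Pp); move: H5; rewrite expr2.
  by have -> : m%:R * (D * (n%:R * (C * P))) = m%:R * (D * (n%:R * C)) * P by ring.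
have mn0 : (0 : R) <= m%:R * n%:R by apply: mulr_ge0.
rewrite natrM.
have : C * P <= C * (m%:R * (D * (n%:R * C))) by apply: ler_wpM2l.
move=> h; apply: le_trans h _.
have -> : C * (m%:R * (D * (n%:R * C))) = (C * C * (m%:R * n%:R)) * D by ring.
by rewrite ler_wpM2r // lerDl.
Qed.


Lemma colsJ_entry (J : {set 'I_n}) k (r : 'I_#|J|) : colsJ T J k r = T k (enum_val r).
Proof. by rewrite /colsJ mxE. Qed.

Lemma gram_unit (J : {set 'I_n}) : (colsJ T J)^T *m colsJ T J \in unitmx.
Proof.
set CJ := colsJ T J; set G := CJ^T *m CJ.
rewrite -row_free_unit; apply: inj_row_free => u Hu.
set x := u^T.
have GT : G^T = G by rewrite /G trmx_mul trmxK.
have Gx : G *m x = 0 by rewrite -GT -trmx_mul Hu trmx0.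
have Q0 : \sum_(k < m) ((CJ *m x) k 0) ^+ 2 = 0.
  have : (x^T *m (G *m x)) 0 0 = 0 by rewrite Gx mulmx0 mxE.
  have -> : x^T *m (G *m x) = (CJ *m x)^T *m (CJ *m x) by rewrite trmx_mul /G !mulmxA.
  rewrite mxE => h; apply: etrans h.
  by apply: eq_bigr => k _; rewrite [in RHS]mxE expr2.
have CX : forall k, (CJ *m x) k 0 = 0.
  move=> k; apply/eqP; rewrite -sqrf_eq0; apply/eqP.
  move/eqP: Q0; rewrite psumr_eq0 => [/allP H|k' _]; last by apply: sqr_ge0.
  by apply/eqP; apply: H; rewrite mem_index_enum.
set e : 'cV[R]_n := \col_i \sum_(r < #|J| | enum_val r == i) x r 0.
have Te : T *m e = T *m 0.
  apply/matrixP => k j; rewrite mulmx0 (ord1 j) [RHS]mxE -(CX k) !mxE.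

  have -> : \sum_(i < n) T k i * e i 0 =
     \sum_(i < n) \sum_(r < #|J| | enum_val r == i) T k (enum_val r) * x r 0.
    apply: eq_bigr => i _; rewrite mxE mulr_sumr; apply: eq_bigr => r /eqP -> //.
  rewrite (partition_big (fun r : 'I_#|J| => enum_val r) predT) //=.
  by apply: eq_bigr => i _; apply: eq_bigr => r _; rewrite /CJ colsJ_entry.
have e0 := Tinj Te.
apply/trmx_inj; rewrite trmx0; apply/matrixP => r j; rewrite (ord1 j) mxE.
have : e (enum_val r) 0 = 0 by rewrite e0 mxE.
rewrite mxE (big_pred1 r) => [h|r' /=]; last by rewrite (inj_eq enum_val_inj).
by move: h; rewrite /x !mxE.
Qed.


Hypothesis Hcone : positive_cone_condition T.

Lemma cone_core (v : 'cV[R]_n) (s w : 'I_n -> R) (J : {set 'I_n}) (P : pred 'I_n) :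
  (forall i, i \notin J -> v i 0 = 0) ->
  (forall i, i \in J -> \sum_(k < m) (T *m v) k 0 * T k i = s i * w i) ->
  (forall i, i \in J -> (s i = 1 \/ s i = -1) /\ 0 <= w i) ->
  (forall i j, i \in J -> j \in J -> ~~ P j -> w j <= w i) ->
  (forall i, i \in J -> P i -> s i * v i 0 < 0) ->
  (exists i0, i0 \in J /\ P i0) -> False.
Proof.
move=> HA HB HB2 HC HD [i0 [Ji0 Pi0]].
have Pi0' : [pred i | (i \in J) && P i] i0 by rewrite /= Ji0 Pi0.
case: (arg_maxP w Pi0') => p /andP [Jp Pp] Hmax.
have Wmax : forall j, j \in J -> w j <= w p.
  move=> j Jj; case Pj: (P j); first by apply: Hmax; rewrite /= Jj Pj.
  by apply: HC => //; rewrite Pj.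
set q := enum_rank_in Jp p.
have fq : enum_val q = p by rewrite /q enum_rankK_in.
set CJ := colsJ T J; set G := CJ^T *m CJ.
set z : 'cV[R]_#|J| := \col_r v (enum_val r) 0.
set rr : 'cV[R]_#|J| := \col_r (s (enum_val r) * w (enum_val r)).
have G1 : CJ *m z = T *m v.
  apply/matrixP => k j; rewrite (ord1 j) !mxE.
  have -> : \sum_(i < n) T k i * v i 0 = \sum_(i in J) T k i * v i 0.
    rewrite [RHS]big_mkcond /=; apply: eq_bigr => i _.
    by case: ifP => // /negbT /HA ->; rewrite mulr0.
  rewrite (big_enum_val (fun i => T k i * v i 0)) /=.
  by apply: eq_bigr => r _; rewrite /CJ colsJ_entry mxE.
have G2 : G *m z = rr.
  rewrite /G -mulmxA G1; apply/matrixP => r j; rewrite (ord1 j) !mxE.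
  rewrite -HB ?enum_valP //; apply: eq_bigr => k _.
  by rewrite !mxE mulrC.
have G4 : z = SJ T J *m rr.
  by rewrite -G2 mulmxA /SJ mulVmx ?mul1mx //; apply: gram_unit.
have Jn0 : J != set0 by apply/set0Pn; exists p.
have Hc := Hcone Jn0 q.
set S := SJ T J in G4 Hc.
have zq : z q 0 = v p 0 by rewrite mxE fq.
have [sp1 wp0] := HB2 p Jp.
have sp2 : s p * s p = 1 by case: sp1 => ->; rewrite ?mulr1 ?mulrN1 ?opprK.
have key : 0 <= s p * v p 0.
  rewrite -zq G4 mxE mulr_sumr (bigD1 q) //=.
  rewrite mxE fq.
  have -> : s p * (S q q * (s p * w p)) = S q q * w p.
    by rewrite mulrCA [s p * (s p * _)]mulrA sp2 mul1r.
  have H2 : \sum_(r < #|J| | r != q) s p * (S q r * rr r 0) >=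
            - (\sum_(r < #|J| | r != q) `|S q r| * w p).
    rewrite -sumrN; apply: ler_sum => r _; rewrite mxE.
    have [sr1 wr0] := HB2 _ (enum_valP r).
    have wr : w (enum_val r) <= w p := Wmax _ (enum_valP r).
    have ns : `|s p * (S q r * (s (enum_val r) * w (enum_val r)))| = `|S q r| * w (enum_val r).
      rewrite !normrM (ger0_norm wr0).
      by case: sp1 => ->; case: sr1 => ->; rewrite ?normrN normr1 ?mul1r ?mulr1.
    apply: le_trans (_ : - (`|S q r| * w (enum_val r)) <= _).
      by rewrite lerN2; apply: ler_wpM2l.
    by rewrite -ns -normrN; rewrite lerNl; apply: ler_norm.
  rewrite -mulr_suml in H2.
  have : 0 <= (S q q - \sum_(j < #|J| | j != q) `|S q j|) * w p by apply: mulr_ge0.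
  move: H2; set X := \sum_(r < #|J| | r != q) s p * (S q r * rr r 0).
  set Y := \sum_(r < #|J| | r != q) `|S q r|.
  move=> H2 H3; nra.
have := HD p Jp Pp; rewrite ltNge key //.
Qed.

End S.
Lemma sign_pm (R : realFieldType) (d b : R) : d * b = `|b| -> b != 0 -> d = 1 \/ d = -1.
Proof.
move=> H bn.
case: (ltgtP b 0) => [bl|bg|be]; last by move/eqP: bn.
- right; move: H; rewrite ltr0_norm // => H.
  apply: (mulIf bn); rewrite H; ring.
- left; move: H; rewrite gtr0_norm // => H.
  by apply: (mulIf bn); rewrite H mul1r.
Qed.

Lemma signs_agree (R : realFieldType) (ca db a b : R) :
  ca * a = `|a| -> db * b = `|b| -> a != 0 -> `|a - b| < `|a| -> ca * db = 1.
Proof.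
move=> Ha Hb an Hab.
have an' : 0 < `|a| by rewrite normr_gt0.
have h1 : a * (a - b) <= `|a| * `|a - b| by rewrite -normrM ler_norm.
have h2 : `|a| * `|a - b| < `|a| * `|a| by rewrite ltr_pM2l.
have h3 : `|a| * `|a| = a * a by rewrite -normrM ger0_norm // -expr2 sqr_ge0.
have abp : 0 < a * b by nra.
have e : (ca * db) * (a * b) = `|a * b| by rewrite normrM -Ha -Hb; ring.
rewrite gtr0_norm // in e.
apply: (mulIf (x := a * b)); first by rewrite gt_eqF.
by rewrite e mul1r.
Qed.


Unset Implicit Arguments.

Theorem mainTheorem16 (R : realType) (m n : nat) (T : 'M[R]_(m, n))
  (y : 'cV[R]_m) (lam : R) :
  (forall x1 x2 : 'cV[R]_n, T *m x1 = T *m x2 -> x1 = x2) ->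
  positive_cone_condition T ->
  0 < lam ->
  exists eps : R, 0 < eps /\ eps < lam /\
    forall mu : R, lam - eps <= mu -> mu <= lam ->
      forall xl xm : 'cV[R]_n,
        is_lasso_min T y lam xl -> is_lasso_min T y mu xm ->
        zero_set xl \subset zero_set xm.
Proof.
move=> Tinj Hcone l0.
have [K [K0 HK]] := @cont_bound _ _ _ T y Tinj.
case: (classic (exists a, is_lasso_min T y lam a)) => [[a Ha]|Hno]; last first.
  exists (lam / 2%:R); split; first by rewrite divr_gt0.
  split; first by lra.
  by move=> mu _ _ xl xm Hxl; exfalso; apply: Hno; exists xl.
have [d [d0 Hd]] : exists d : R, 0 < d /\ forall i, a i 0 != 0 -> d <= `|a i 0|.
  case: (pickP (fun i => a i 0 != 0)) => [i0 Hi0 | Hnone].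
    have Hi0' : [pred i | a i 0 != 0] i0 by [].
    case: (arg_minP (fun i => `|a i 0|) Hi0') => i Hi Hmin.
    by exists `|a i 0|; split; [rewrite normr_gt0 | exact: Hmin].
  by exists 1; split => // i; rewrite Hnone.
set e2 := d * lam ^+ 2 / (4%:R * K).
have e20 : 0 < e2 by rewrite /e2 !divr_gt0 // ?mulr_gt0 // ?exprn_gt0 // ltr0n.
set eps := Num.min (lam / 2%:R) e2.
have eps0 : 0 < eps by rewrite lt_min e20 andbT divr_gt0.
have eps1 : eps <= lam / 2%:R by rewrite ge_min lexx.
have eps2 : eps <= e2 by rewrite ge_min lexx orbT.
have Keps : K * eps <= d * lam ^+ 2 / 4%:R.
  have : K * eps <= K * e2 by apply: ler_wpM2l => //; apply: ltW.
  have -> : K * e2 = d * lam ^+ 2 / 4%:R.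
    by rewrite /e2; field; rewrite gt_eqF.
  done.
exists eps; split => //; split; first by lra.
move=> mu mu1 mu2 xl b Hxl Hb.
have m0 : 0 < mu by lra.
have xla : xl = a.
  apply/matrixP => i j; rewrite (ord1 j).
  have := HK lam lam xl a Hxl Ha l0 l0 (lexx _) i.
  rewrite subrr mulr0 normr_le0 subr_eq0 => /eqP //.
subst xl.
have Hab : forall i, a i 0 != 0 -> `|a i 0 - b i 0| < `|a i 0|.
  move=> i ai; apply: le_lt_trans (HK _ _ _ _ Ha Hb l0 m0 mu2 i) _.
  apply: lt_le_trans (Hd i ai).
  have e : (mu^-1 - lam^-1) * (lam * mu) = lam - mu by field; rewrite !gt_eqF.
  have lm : 0 < lam * mu by apply: mulr_gt0.
  rewrite -(ltr_pM2r lm) -mulrA e.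
  have h1 : K * (lam - mu) <= K * eps by apply: ler_wpM2l; [apply: ltW|lra].
  have h2 : d * lam ^+ 2 / 4%:R < d * (lam * mu).
    have : lam / 2%:R <= mu by lra.
    move=> h; have : d * (lam * (lam / 2%:R)) <= d * (lam * mu).
      by apply: ler_wpM2l; [apply: ltW | apply: ler_wpM2l; [apply: ltW|]].
    have -> : d * (lam * (lam / 2%:R)) = d * lam ^+ 2 / 2%:R by field.
    have : d * lam ^+ 2 / 4%:R < d * lam ^+ 2 / 2%:R.
      have dl : 0 < d * lam ^+ 2 by apply: mulr_gt0 => //; apply: exprn_gt0.
      rewrite ltr_pM2l //; rewrite ltf_pV2 ?posrE ?ltr0n //  ltr_nat //.
    lra.
  lra.
apply/subsetP => i; rewrite !inE => /eqP ai0.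
apply/negPn/negP => bi0.
set ca := fun j => - (lam * gr T y a j).
set db := fun j => - (mu * gr T y b j).
have Fa := foc Ha l0; have Fb := foc Hb m0.
apply: (cone_core Tinj Hcone (v := a - b) (s := db)
   (w := fun j => mu^-1 - lam^-1 * ca j * db j)
   (J := [set j | b j 0 != 0]) (P := fun j => a j 0 == 0)).
- move=> j; rewrite inE negbK => /eqP bj.
  rewrite !mxE bj subr0.
  apply/eqP; apply: contraT => aj.
  by have := Hab j aj; rewrite bj subr0 ltxx.
- move=> j Jj; rewrite (gram_rel T y).
  have [_ e1] := Fa j; have [_ e2'] := Fb j.
  rewrite inE in Jj.
  have [sp|sn] := sign_pm e2' Jj.
  + have -> : gr T y a j = - (lam^-1 * ca j) by rewrite /ca mulrN opprK mulrA mulVf ?mul1r // gt_eqF.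
    have -> : gr T y b j = - (mu^-1 * db j) by rewrite /db mulrN opprK mulrA mulVf ?mul1r // gt_eqF.
    have dj : db j = 1 := sp. rewrite dj; ring.
  + have -> : gr T y a j = - (lam^-1 * ca j) by rewrite /ca mulrN opprK mulrA mulVf ?mul1r // gt_eqF.
    have -> : gr T y b j = - (mu^-1 * db j) by rewrite /db mulrN opprK mulrA mulVf ?mul1r // gt_eqF.
    have dj : db j = -1 := sn. rewrite dj; ring.
- move=> j Jj; rewrite inE in Jj.
  have [c1 e1] := Fa j; have [d1 e2'] := Fb j.
  split; first exact: sign_pm e2' Jj.
  have : ca j * db j <= 1.
    apply: le_trans (ler_norm _) _; rewrite normrM.
    have c1' : `|ca j| <= 1 by rewrite /ca normrN.
    have d1' : `|db j| <= 1 by rewrite /db normrN.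
    by rewrite -[1]mulr1; apply: ler_pM.
  have al : 0 < lam^-1 by rewrite invr_gt0.
  have ab : lam^-1 <= mu^-1 by rewrite lef_pV2 ?posrE.
  move=> h; rewrite -mulrA subr_ge0.
  apply: le_trans ab; rewrite ler_piMr // ltW //.
- move=> j k Jj Jk /= ak.
  rewrite inE in Jk.
  have [c1 e1] := Fa k; have [d1 e2'] := Fb k.
  have e : lam^-1 * ca k * db k = lam^-1.
    by rewrite -mulrA (signs_agree e1 e2' ak (Hab k ak)) mulr1.
  rewrite /= e lerD2l lerN2.
  have [c1' _] := Fa j; have [d1' _] := Fb j.
  have : ca j * db j <= 1.
    apply: le_trans (ler_norm _) _; rewrite normrM.
    have c1'' : `|ca j| <= 1 by rewrite /ca normrN.
    have d1'' : `|db j| <= 1 by rewrite /db normrN.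
    by rewrite -[1]mulr1; apply: ler_pM.
  have al : 0 < lam^-1 by rewrite invr_gt0.
  by move=> h; rewrite -mulrA ler_piMr // ltW.
- move=> j Jj /= /eqP aj; rewrite inE in Jj.
  have [_ e2'] := Fb j.
  rewrite !mxE aj sub0r mulrN.
  have -> : db j * b j 0 = `|b j 0| := e2'.
  by rewrite oppr_lt0 normr_gt0.
- by exists i; rewrite inE; split => //; apply/eqP.
Qed.
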